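(* For all integers $r,k\ge2$, the Milnor number $M_k^r=rN_k^r-N_{k+1}^r$ is positive (equivalently $N_{k+1}^r<rN_k^r$), except when $r=2$ and $k\in\{2,4,6\}$.
   Context: $N_k^r=\frac1k\sum_{d\mid k}\mu(d)\,r^{k/d}$ (Witt's formula for the number of basic commutators of length $k$ in $r$ variables), where $\mu$ is the Möbius function: $\mu(d)=1$ if $d=1$ or $d$ is a product of an even number of distinct primes, $\mu(d)=-1$ if $d$ is a product of an odd number of distinct primes, and $\mu(d)=0$ otherwise. *)

(* Defs.v *)
From mathcomp Require Import all_boot all_order all_algebra.
Set Implicit Arguments. Unset Strict Implicit. Unset Printing Implicit Defensive.
Import Order.TTheory GRing.Theory Num.Theory.
Local Open Scope ring_scope.

Definition moebius (d : nat) : int :=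
  if [forall p : 'I_d.+1, prime p ==> ~~ (p * p %| d)%N]
  then (-1) ^+ size (primes d) else 0.

Definition witt (r k : nat) : rat :=
  (k%:R)^-1 * \sum_(d <- divisors k) (moebius d)%:~R * (r ^ (k %/ d))%:R.

Definition milnor (r k : nat) : rat := r%:R * witt r k - witt r k.+1.

(* Main.v *)
Require Import Defs.
From mathcomp Require Import all_boot all_order all_algebra.
From mathcomp Require Import zify ring lra.
Import Order.TTheory GRing.Theory Num.Theory.
Local Open Scope ring_scope.

Definition A (r k : nat) : int :=
  \sum_(d <- divisors k) moebius d * (r ^ (k %/ d))%N%:Z.

Definition S (r m : nat) : nat := (\sum_(1 <= j < m.+1) r ^ j)%N.

Lemma forall_ordE n (P : pred nat) : [forall i : 'I_n, P i] = all P (iota 0 n).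
Proof.
apply/forallP/allP => [H x|H i].
  by rewrite mem_iota add0n => /andP[_ xn]; exact (H (Ordinal xn)).
by apply: H; rewrite mem_iota ltn_ord.
Qed.

Definition mob' (d : nat) : int :=
  if all (fun p => prime p ==> ~~ (p * p %| d)%N) (iota 0 d.+1)
  then (-1) ^+ size (primes d) else 0.

Lemma moebiusE d : moebius d = mob' d.
Proof. by rewrite /moebius (forall_ordE _ (fun p => prime p ==> ~~ (p * p %| d)%N)). Qed.

Lemma A_comp r k : A r k =
  foldr (fun d acc => mob' d * (r ^ (k %/ d))%N%:Z + acc) 0 (divisors k).
Proof.
rewrite /A; elim: (divisors k) => [|d s IH]; first by rewrite big_nil.
by rewrite big_cons IH moebiusE.
Qed.

Lemma moebius_le1 d : `|moebius d| <= 1.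
Proof.
rewrite /moebius; case: ifP => _; last by rewrite normr0.
by rewrite normrX normrN1 expr1n.
Qed.

Lemma moebius1 : moebius 1 = 1.
Proof. by rewrite moebiusE. Qed.

Lemma sum_sub_le (s t : seq nat) (F : nat -> nat) :
  uniq s -> {subset s <= t} -> uniq t ->
  (\sum_(e <- s) F e <= \sum_(e <- t) F e)%N.
Proof.
move=> us st ut.
have -> : (\sum_(e <- s) F e = \sum_(i <- t | i \in s) F i)%N.
  rewrite -[RHS]big_filter; apply: perm_big; apply: uniq_perm => //; first exact: filter_uniq.
  by move=> x; rewrite mem_filter; case xs: (x \in s) => //=; rewrite st.
rewrite [X in (_ <= X)%N](bigID (fun e => e \in s)) /=.
exact: leq_addr.
Qed.

Lemma rest_le (r k : nat) : (0 < k)%N ->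
  (\sum_(d <- divisors k | d != 1%N) r ^ (k %/ d) <= S r k./2)%N.
Proof.
move=> k0.
rewrite -big_filter.
rewrite -(big_map (fun d => k %/ d)%N xpredT (fun e => r ^ e)%N).
rewrite /S /index_iota subSS subn0.
apply: sum_sub_le; last exact: iota_uniq.
- rewrite map_inj_in_uniq; first by apply: filter_uniq; exact: divisors_uniq.
  move=> a b; rewrite !mem_filter -!dvdn_divisors // => /andP[_ ak] /andP[_ bk] e.
  have : (k %/ (k %/ a) = k %/ (k %/ b))%N by rewrite e.
  by rewrite !divnA // !mulKn.
- move=> x /mapP[d]; rewrite mem_filter -dvdn_divisors // => /andP[d1 dk] ->.
  have d0 : (0 < d)%N by apply: (dvdn_gt0 k0 dk).
  have d2 : (2 <= d)%N by case: d d0 d1 {dk} => [|[|d]].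
  rewrite mem_iota add1n ltnS divn_gt0 // dvdn_leq //= -divn2.
  exact: leq_div2l.
Qed.

Lemma PoszSum (s : seq nat) (P : pred nat) (F : nat -> nat) :
  ((\sum_(i <- s | P i) F i)%N : int) = \sum_(i <- s | P i) (F i : int).
Proof.
elim: s => [|x s IH]; first by rewrite !big_nil.
by rewrite !big_cons -IH; case: (P x) => //; rewrite PoszD.
Qed.

Lemma A_bound r k : (0 < k)%N -> `|A r k - (r ^ k)%N%:Z| <= (S r k./2)%:Z.
Proof.
move=> k0.
rewrite /A (bigD1_seq 1%N); last exact: divisors_uniq; last by rewrite -dvdn_divisors // dvd1n.
rewrite moebius1 mul1r divn1 /= addrC addrK.

apply: le_trans (ler_norm_sum _ _ _) _.
apply: le_trans (_ : _ <= ((\sum_(d <- divisors k | d != 1%N) r ^ (k %/ d))%N : int)) _.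
  rewrite PoszSum; apply: ler_sum => d _.
  rewrite normrM [X in _ * X]ger0_norm //.
  by apply: ler_piMl => //; apply: moebius_le1.
by rewrite lez_nat; apply: rest_le.
Qed.

Lemma S_bound r m : (1 <= r)%N -> (S r m * (r - 1) + r = r ^ m.+1)%N.
Proof.
move=> r1; rewrite /S; elim: m => [|m IH]; first by rewrite big_geq // expn1.
rewrite big_nat_recr //= mulnDl -addnAC IH.
case: r r1 {IH} => // r _; rewrite subSS subn0 [in RHS]expnS; nia.
Qed.

Lemma wittE r k : witt r k = (k%:R)^-1 * (A r k)%:~R.
Proof.
rewrite /witt /A; congr (_ * _).
elim: (divisors k) => [|d s IH]; first by rewrite !big_nil.
by rewrite !big_cons IH intrD intrM.
Qed.

Lemma nat_part r k m m' : (2 <= r)%N ->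
  ((k.+1) * r ^ (m + 2) + k * r ^ (m' + 1) <= (r - 1) * r ^ (k.+1))%N ->
  (k * S r m' + k.+1 * r * S r m < r ^ k.+1)%N.
Proof.
move=> r2 C.
have h1 := S_bound r m (ltnW r2).
have h2 := S_bound r m' (ltnW r2).
rewrite (_ : m + 2 = (m.+1).+1)%N ?addn2 // expnS -h1 in C.
rewrite addn1 -h2 in C.
case: r r2 h1 h2 C => [|[|r]] // _ h1 h2 C.
rewrite subSS subn0 in C h1 h2.
rewrite -(ltn_pmul2l (_ : 0 < r.+1)%N) //.
nia.
Qed.

Lemma int_part (r k : nat) (a b : int) (S1 S2 : nat) :
  `|a - (r ^ k)%N%:Z| <= S1%:Z -> `|b - (r ^ k.+1)%N%:Z| <= S2%:Z ->
  (k * S2 + k.+1 * r * S1 < r ^ k.+1)%N ->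
  k%:Z * b < (k.+1 * r)%N%:Z * a.
Proof.
move=> /ler_normlP [h1 h1'] /ler_normlP [h2 h2'] h.
rewrite expnS in h h1 h2 h2'.
move: (r ^ k)%N h h1 h1' h2 h2' => P h h1 h1' h2 h2'.
have e1 : k%:Z * b <= k%:Z * (r * P + S2)%N%:Z.
  by apply: ler_wpM2l => //; rewrite PoszD; lia.
have e2 : (k.+1 * r)%N%:Z * (P%:Z - S1%:Z) <= (k.+1 * r)%N%:Z * a.
  by apply: ler_wpM2l => //; lia.
nia.
Qed.

Lemma natz (n : nat) : ((n%:Z)%:~R : rat) = n%:R.
Proof. by []. Qed.

Lemma milnor_of_int r k : (0 < k)%N ->
  k%:Z * A r k.+1 < (k.+1 * r)%N%:Z * A r k -> 0 < milnor r k.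
Proof.
move=> k0 h.
have : ((k%:Z * A r k.+1)%:~R : rat) < ((k.+1 * r)%N%:Z * A r k)%:~R by rewrite ltr_int.
rewrite !intrM !natz natrM.
rewrite /milnor !wittE.
move: (A r k)%:~R (A r k.+1)%:~R => a b hab.
have kz : (k%:R : rat) != 0 by rewrite pnatr_eq0 -lt0n.
have k1z : (k.+1%:R : rat) != 0 by rewrite pnatr_eq0.
have -> : r%:R * ((k%:R)^-1 * a) - (k.+1%:R)^-1 * b =
   (k.+1%:R * r%:R * a - k%:R * b) / (k%:R * k.+1%:R) :> rat.
  by field; rewrite kz andbT (_ : 1 + k%:R = k.+1%:R :> rat) // -addn1 natrD addrC.
apply: divr_gt0; first by rewrite subr_gt0.
by rewrite -natrM ltr0n muln_gt0 k0.
Qed.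

Definition Cond r k :=
  ((k.+1) * r ^ (k./2 + 2) + k * r ^ ((k.+1)./2 + 1) <= (r - 1) * r ^ (k.+1))%N.

Lemma general r k : (2 <= r)%N -> (0 < k)%N -> Cond r k -> 0 < milnor r k.
Proof.
move=> r2 k0 C; apply: milnor_of_int => //.
apply: (int_part _ _ _ _ _ _ (A_bound r k k0) (A_bound r k.+1 (ltn0Sn k))).
exact: (nat_part _ _ _ _ r2 C).
Qed.

Lemma half_odd m : (m.*2.+1)./2 = m.
Proof. by rewrite -uphalfE uphalf_double. Qed.

Lemma half_even2 m : (m.*2.+2)./2 = m.+1.
Proof. by rewrite -uphalfE /= doubleK. Qed.

Definition E r m := ((m.*2.+1) * r + m.*2 <= (r - 1) * r ^ m)%N.
Definition O r m := (4 * m + 3 <= (r - 1) * r ^ m)%N.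

Lemma condE r m : (2 <= r)%N -> E r m -> Cond r m.*2.
Proof.
rewrite /E /Cond => r2 h.
rewrite doubleK half_odd.
rewrite (_ : m.*2.+1 = m + m + 1)%N; last by rewrite -addnn addn1.
rewrite !expnD expn1 (_ : r ^ 2 = r * r)%N; last by rewrite expnS expn1.
move: (r ^ m)%N h => x h.
case: r r2 h => [|[|r]] // _; rewrite subSS subn0 => h.
have H := leq_mul (leqnn (r.+2 * x)) h.
rewrite -?muln2 in H *. clear h; lia.
Qed.

Lemma condO r m : (2 <= r)%N -> O r m -> Cond r m.*2.+1.
Proof.
rewrite /O /Cond => r2 h.
rewrite half_odd half_even2.
rewrite (_ : m.*2.+2 = m + m + 2)%N; last by rewrite -addnn addn2.
rewrite !expnD (_ : r ^ 2 = r * r)%N; last by rewrite expnS expn1.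
rewrite expn1 expnS.
move: (r ^ m)%N h => x h.
case: r r2 h => [|[|r]] // _; rewrite subSS subn0 => h.
have H := leq_mul (leqnn (r.+2 * r.+2 * x)) h.
rewrite -?muln2 in H *. clear h; lia.
Qed.

Lemma E_step r m : (2 <= r)%N -> (1 <= m)%N -> E r m -> E r m.+1.
Proof.
rewrite /E => r2 m1 h; rewrite expnS.
move: (r ^ m)%N h => x h.
case: r r2 h => [|[|r]] // _; rewrite subSS subn0 => h.
have H := leq_mul (leqnn r.+2) h.
rewrite -?muln2 in H h *. nia.
Qed.

Lemma O_step r m : (2 <= r)%N -> (1 <= m)%N -> O r m -> O r m.+1.
Proof.
rewrite /O => r2 m1 h; rewrite expnS.
move: (r ^ m)%N h => x h.
case: r r2 h => [|[|r]] // _; rewrite subSS subn0 => h.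
have H := leq_mul (leqnn r.+2) h.
nia.
Qed.

Lemma up (P : nat -> Prop) m0 :
  (forall m, (m0 <= m)%N -> P m -> P m.+1) -> P m0 ->
  forall m, (m0 <= m)%N -> P m.
Proof.
move=> st p0; elim=> [|m IH] hm.
  by move: hm; rewrite leqn0 => /eqP <-.
case: (leqP m0 m) => h; first exact: st h (IH h).
have e : m0 = m.+1 by apply/eqP; rewrite eqn_leq hm h.
by rewrite -e.
Qed.

Lemma oddcase r m m0 : (2 <= r)%N -> (1 <= m0)%N -> O r m0 -> (m0 <= m)%N ->
  0 < milnor r m.*2.+1.
Proof.
move=> r2 m01 h0 hm; apply: general => //; apply: condO => //.
apply: (@up (O r) m0 _ h0) => // n hn; apply: O_step => //.
exact: leq_trans hn.
Qed.

Lemma evencase r m m0 : (2 <= r)%N -> (1 <= m0)%N -> E r m0 -> (m0 <= m)%N ->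
  0 < milnor r m.*2.
Proof.
move=> r2 m01 h0 hm; apply: general => //.
  by rewrite -double0 ltn_double; apply: leq_trans hm.
apply: condE => //.
apply: (@up (E r) m0 _ h0) => // n hn; apply: E_step => //.
exact: leq_trans hn.
Qed.

Ltac fin := apply: milnor_of_int => //; rewrite !A_comp; by [].

Theorem lemma2p5 (r k : nat) (hr : (2 <= r)%N) (hk : (2 <= k)%N) :
  ~ (r = 2%N /\ k \in [:: 2; 4; 6]%N) -> 0 < milnor r k.
Proof.
move=> hne.
have hk2 := odd_double_half k.
move: (k./2) hk2 => m; case: (odd k) => /= hkm; rewrite -hkm in hk hne *.
-
  rewrite add1n in hk hne *.
  case: r hr hne => [|[|[|[|r]]]] hr hne; try by [].
  + case: m hne hk {hkm} => [|[|[|[|[|m]]]]] hne hk.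
    1: by [].
    1-4: fin.
    by apply: (@oddcase _ _ 5).
  + case: m hne hk {hkm} => [|[|m]] hne hk.
    1: by [].
    1: fin.
    by apply: (@oddcase _ _ 2).
  + apply: (@oddcase _ _ 1) => //; last by case: m hk {hkm hne}.
    rewrite /O muln1 expn1 subSS subn0; nia.
-
  rewrite add0n in hk hne *.
  case: r hr hne => [|[|[|[|[|r]]]]] hr hne; try by [].
  + case: m hne hk {hkm} => [|[|[|[|[|m]]]]] hne hk.
    1: by [].
    1-3: by exfalso; apply: hne; split.
    1: fin.
    by apply: (@evencase _ _ 5).
  + case: m hne hk {hkm} => [|[|[|m]]] hne hk.
    1: by [].
    1-2: fin.
    by apply: (@evencase _ _ 3).
  + case: m hne hk {hkm} => [|[|m]] hne hk.
    1: by [].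
    1: fin.
    by apply: (@evencase _ _ 2).
  + apply: (@evencase _ _ 1) => //; last by case: m hk {hkm hne}.
    rewrite /E expn1 subSS subn0; nia.
Qed.
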